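(* For every $\rho>0$ and every $\rho$-patch $\mathcal P$ of $V$, $$\nu(B_{\mathcal P})=\prod_p\Big(1-\frac{|\mathcal P_p|}{p^2}\Big).$$
   Context: Throughout, $p$ denotes a prime. $V=\{x\in\mathbb Z^2:\gcd(x_1,x_2)=1\}$. For $X\subset\mathbb Z^2$, $X_p$ is the image of $X$ in $\mathbb Z^2/p\mathbb Z^2$. Subsets of $\mathbb Z^2$ are identified with elements of $\{0,1\}^{\mathbb Z^2}$ (product topology), and $\mathbb X_V:=\overline{\{t+V:t\in\mathbb Z^2\}}$, which equals the set of $A\subset\mathbb Z^2$ with $|A_p|<p^2$ for all $p$. A $\rho$-patch of $V$ is a set $(V-t)\cap B_\rho(0)$, $t\in\mathbb Z^2$; the cylinder set $C_{\mathcal P}$ is $\{X\in\mathbb X_V: X\cap B_\rho(0)=\mathcal P\}$, and $B_{\mathcal P}:=\{X\in\mathbb X_V: \mathcal P\subset X\cap B_\rho(0)\}$. $\nu$ is the unique Borel probability measure on $\mathbb X_V$ with $\nu(C_{\mathcal P})$ equal to the natural density of $\{t\in\mathbb Z^2:(V-t)\cap B_\rho(0)=\mathcal P\}$; this density is known to equal $\sum_{\mathcal F\subset(\mathbb Z^2\cap B_\rho(0))\setminus\mathcal P}(-1)^{|\mathcal F|}\prod_p\big(1-|(\mathcal P\cup\mathcal F)_p|/p^2\big)$. *)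

(* Defs.v *)
From Stdlib Require Import Reals ZArith Znumtheory List.
Import ListNotations.
Open Scope R_scope.

Definition pt := (Z * Z)%type.

Definition pt_eq_dec : forall x y : pt, {x = y} + {x <> y}.
Proof. decide equality; apply Z.eq_dec. Defined.

Definition pt_eqb (x y : pt) : bool := if pt_eq_dec x y then true else false.

Definition pt_add (x y : pt) : pt := ((fst x + fst y)%Z, (snd x + snd y)%Z).

(* V = visible (primitive) lattice points: gcd(x1,x2) = 1. *)
Definition inV (x : pt) : bool := Z.eqb (Z.gcd (fst x) (snd x)) 1%Z.

Definition inballb (r : R) (x : pt) : bool :=
  if Rle_dec (IZR (fst x) ^ 2 + IZR (snd x) ^ 2) (r ^ 2) then true else false.

Definition zrange (K : Z) : list Z :=
  map (fun n => (Z.of_nat n - K)%Z) (seq 0 (Z.to_nat (2 * K + 1))).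

Definition ball_pts (r : R) : list pt :=
  let K := Z.abs (up r) in
  filter (inballb r) (list_prod (zrange K) (zrange K)).

(* All sublists (= all subsets, for a duplicate-free list). *)
Fixpoint subsets {A : Type} (l : list A) : list (list A) :=
  match l with
  | [] => [[]]
  | a :: l' => let s := subsets l' in map (cons a) s ++ s
  end.

Definition memb (x : pt) (Q : list pt) : bool := existsb (pt_eqb x) Q.

Definition inclb (P Q : list pt) : bool := forallb (fun x => memb x Q) P.

(* (V - t) ∩ B_r(0) = Q, for Q ⊆ Z^2 ∩ B_r(0) (x ∈ V - t iff x + t ∈ V). *)
Definition patch_eqb (r : R) (t : pt) (Q : list pt) : bool :=
  forallb (fun x => Bool.eqb (inV (pt_add x t)) (memb x Q)) (ball_pts r).

Definition is_patch (r : R) (P : list pt) : Prop :=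
  exists t : pt, forall x : pt, In x P <-> (In x (ball_pts r) /\ inV (pt_add x t) = true).

(* N-th term of the natural density (averaging over t ∈ Z^2 ∩ B_N(0)) of
   { t ∈ Z^2 : (V - t) ∩ B_r(0) = Q }. *)
Definition dens_seq (r : R) (Q : list pt) (N : nat) : R :=
  INR (length (filter (fun t => patch_eqb r t Q) (ball_pts (INR N))))
  / INR (length (ball_pts (INR N))).

(* nu(B_P) = sum of nu(C_Q) over Q with P ⊆ Q ⊆ Z^2 ∩ B_r(0),
   given the values d Q = nu(C_Q). *)
Definition nuB (r : R) (P : list pt) (d : list pt -> R) : R :=
  fold_right Rplus 0
    (map d (filter (fun Q => inclb P Q) (subsets (ball_pts r)))).

Definition card_mod (p : nat) (P : list pt) : nat :=
  length (nodup pt_eq_dec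
    (map (fun x => (Z.modulo (fst x) (Z.of_nat p), Z.modulo (snd x) (Z.of_nat p))) P)).

Definition primeb (p : nat) : bool := if prime_dec (Z.of_nat p) then true else false.

(* Partial product over primes p <= N+1 of (1 - |P_p| / p^2). *)
Definition partial_prod (P : list pt) (N : nat) : R :=
  fold_right Rmult 1
    (map (fun p => 1 - INR (card_mod p P) / (INR p ^ 2))
         (filter primeb (seq 2 N))).

(* Main.v *)
Require Import Defs.
From Stdlib Require Import Reals ZArith Znumtheory List Lia Lra Permutation.
Import ListNotations.

Definition cnt {A} (f : A -> bool) (l : list A) : nat := length (filter f l).
Definition nsum (l : list nat) : nat := fold_right plus 0%nat l.

Lemma cnt_cons {A} (f : A -> bool) a l :
  cnt f (a :: l) = ((if f a then 1 else 0) + cnt f l)%nat.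
Proof. unfold cnt; simpl; destruct (f a); reflexivity. Qed.

Lemma cnt_app {A} (f : A -> bool) l1 l2 : cnt f (l1 ++ l2) = (cnt f l1 + cnt f l2)%nat.
Proof. unfold cnt. rewrite filter_app, length_app. reflexivity. Qed.

Lemma cnt_le_len {A} (f : A -> bool) l : (cnt f l <= length l)%nat.
Proof. induction l; rewrite ?cnt_cons; simpl; [unfold cnt; simpl; lia|destruct (f a); lia]. Qed.

Lemma cnt_mono {A} (f g : A -> bool) l :
  (forall x, In x l -> f x = true -> g x = true) -> (cnt f l <= cnt g l)%nat.
Proof.
  induction l; intros H; [unfold cnt; simpl; lia|].
  rewrite !cnt_cons. assert (IH := IHl (fun x Hx => H x (or_intror Hx))).
  destruct (f a) eqn:E; [rewrite (H a (or_introl eq_refl) E); lia|destruct (g a); lia].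
Qed.

Lemma cnt_ext {A} (f g : A -> bool) l :
  (forall x, In x l -> f x = g x) -> cnt f l = cnt g l.
Proof.
  intros H; apply Nat.le_antisymm; apply cnt_mono; intros x Hx; rewrite (H x Hx); auto.
Qed.

Lemma cnt_or {A} (f g : A -> bool) l :
  (cnt (fun x => orb (f x) (g x)) l <= cnt f l + cnt g l)%nat.
Proof.
  induction l; [unfold cnt; simpl; lia|]. rewrite !cnt_cons. destruct (f a), (g a); simpl; lia.
Qed.

Lemma cnt_false {A} (f : A -> bool) l : (forall x, In x l -> f x = false) -> cnt f l = 0%nat.
Proof.
  induction l; intros H; [reflexivity|]. rewrite cnt_cons, H by (left; auto).
  apply IHl; intros; apply H; right; auto.
Qed.

Lemma cnt_perm {A} (f : A -> bool) l l' : Permutation l l' -> cnt f l = cnt f l'.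
Proof.
  induction 1; rewrite ?cnt_cons; try lia.
Qed.

Lemma cnt_map {A B} (f : B -> bool) (h : A -> B) l : cnt f (map h l) = cnt (fun x => f (h x)) l.
Proof. induction l; simpl; [reflexivity|]. rewrite !cnt_cons, IHl. reflexivity. Qed.

Lemma nsum_app l1 l2 : nsum (l1 ++ l2) = (nsum l1 + nsum l2)%nat.
Proof. induction l1; simpl; lia. Qed.

Lemma cnt_prod {A B} (f : A * B -> bool) la lb :
  cnt f (list_prod la lb) = nsum (map (fun a => cnt (fun b => f (a, b)) lb) la).
Proof.
  induction la; simpl; [reflexivity|]. rewrite cnt_app, IHla, cnt_map. reflexivity.
Qed.

Lemma nsum_swap {A B} (f : A -> B -> bool) la lb :
  nsum (map (fun a => cnt (f a) lb) la) = nsum (map (fun b => cnt (fun a => f a b) la) lb).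
Proof.
  induction la; simpl.
  - induction lb; simpl; auto.
  - rewrite IHla. clear IHla. induction lb; simpl; [unfold cnt; reflexivity|].
    rewrite !cnt_cons. rewrite <- IHlb. destruct (f a a0); simpl; lia.
Qed.

Lemma nsum_le {A} (g h : A -> nat) l :
  (forall x, In x l -> (g x <= h x)%nat) -> (nsum (map g l) <= nsum (map h l))%nat.
Proof.
  induction l; simpl; intros H; [lia|].
  assert (H1 := H a (or_introl eq_refl)). assert (H2 := IHl (fun x Hx => H x (or_intror Hx))). lia.
Qed.

Lemma nsum_ext {A} (g h : A -> nat) l :
  (forall x, In x l -> g x = h x) -> nsum (map g l) = nsum (map h l).
Proof. intros H; apply Nat.le_antisymm; apply nsum_le; intros x Hx; rewrite H; auto. Qed.

Lemma nsum_const {A} (c : nat) (l : list A) : nsum (map (fun _ => c) l) = (c * length l)%nat.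
Proof. induction l; simpl; lia. Qed.

Lemma nsum_scal {A} (c : nat) (g : A -> nat) l : nsum (map (fun x => (c * g x)%nat) l) = (c * nsum (map g l))%nat.
Proof. induction l; simpl; lia. Qed.

Lemma nsum_plus {A} (g h : A -> nat) l : nsum (map (fun x => (g x + h x)%nat) l) = (nsum (map g l) + nsum (map h l))%nat.
Proof. induction l; simpl; lia. Qed.

Lemma cnt_inj {A B} (f : A -> bool) (g : B -> bool) (h : A -> B) l1 l2 :
  NoDup l1 ->
  (forall x y, In x l1 -> In y l1 -> f x = true -> f y = true -> h x = h y -> x = y) ->
  (forall x, In x l1 -> f x = true -> In (h x) l2 /\ g (h x) = true) ->
  (cnt f l1 <= cnt g l2)%nat.
Proof.
  intros Hnd Hinj Him. unfold cnt. rewrite <- (length_map h (filter f l1)).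
  apply NoDup_incl_length.
  - apply FinFun.Injective_map_NoDup_in; [|apply NoDup_filter; auto].
    intros x y Hx Hy. apply filter_In in Hx, Hy. apply Hinj; tauto.
  - intros z Hz. apply in_map_iff in Hz. destruct Hz as [x [<- Hx]].
    apply filter_In in Hx. apply filter_In. apply Him; tauto.
Qed.

Lemma nsum_cnt_le {A} (f : A -> bool) (l : list A) : (cnt f l <= length l)%nat.
Proof. apply cnt_le_len. Qed.

Lemma pt_eqb_true x y : pt_eqb x y = true <-> x = y.
Proof. unfold pt_eqb; destruct (pt_eq_dec x y); split; congruence. Qed.

Lemma pt_eqb_refl x : pt_eqb x x = true.
Proof. apply pt_eqb_true; reflexivity. Qed.

Lemma memb_In x Q : memb x Q = true <-> In x Q.
Proof.
  unfold memb. rewrite existsb_exists. split.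
  - intros [y [Hy E]]. apply pt_eqb_true in E. subst; auto.
  - intros H. exists x; split; auto. apply pt_eqb_refl.
Qed.

Lemma cnt_eq_one (l : list pt) c : NoDup l -> In c l -> cnt (fun a => pt_eqb a c) l = 1%nat.
Proof.
  induction l as [|a l IH]; intros Hnd Hc; [destruct Hc|].
  inversion Hnd; subst. rewrite cnt_cons. destruct Hc as [<-|Hc].
  - rewrite pt_eqb_refl. rewrite cnt_false; auto. intros x Hx.
    destruct (pt_eqb x a) eqn:E; auto. apply pt_eqb_true in E; subst; contradiction.
  - rewrite IH; auto. destruct (pt_eqb a c) eqn:E; auto. apply pt_eqb_true in E; subst; contradiction.
Qed.

Lemma cnt_memb (T l : list pt) : NoDup T -> NoDup l -> incl l T -> cnt (fun c => memb c l) T = length l.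
Proof.
  intros HT Hl Hi. unfold cnt. apply Nat.le_antisymm; apply NoDup_incl_length.
  - apply NoDup_filter; auto.
  - intros x Hx. apply filter_In in Hx. apply memb_In; tauto.
  - auto.
  - intros x Hx. apply filter_In. split; auto. apply memb_In; auto.
Qed.

Lemma subsets_incl (l Q : list pt) : In Q (subsets l) -> incl Q l.
Proof.
  revert Q; induction l as [|a l IH]; simpl; intros Q HQ.
  - destruct HQ as [<-|[]]; intros x [].
  - apply in_app_or in HQ. destruct HQ as [HQ|HQ].
    + apply in_map_iff in HQ. destruct HQ as [Q' [<- HQ']].
      intros x [<-|Hx]; [left; auto|right; apply (IH Q' HQ'); auto].
    + intros x Hx; right; apply (IH Q HQ); auto.
Qed.

Lemma cnt_filter {A} (f g : A -> bool) l : cnt f (filter g l) = cnt (fun x => andb (g x) (f x)) l.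
Proof. induction l; simpl; auto. rewrite cnt_cons. destruct (g a); simpl; rewrite ?cnt_cons, IHl; auto. Qed.

Lemma forallb_ext_in {A} (f g : A -> bool) l : (forall x, In x l -> f x = g x) -> forallb f l = forallb g l.
Proof. induction l; simpl; intros H; auto. rewrite H by auto. rewrite IHl; auto. Qed.

Lemma subsets_unique (l : list pt) (g : pt -> bool) : NoDup l ->
  cnt (fun Q => forallb (fun x => Bool.eqb (g x) (memb x Q)) l) (subsets l) = 1%nat.
Proof.
  induction l as [|a l IH]; intros Hnd; [reflexivity|].
  inversion Hnd; subst. simpl. rewrite cnt_app, cnt_map.
  set (F := fun Q => forallb (fun x => Bool.eqb (g x) (memb x Q)) l).
  assert (E1 : cnt (fun x => forallb (fun x0 => Bool.eqb (g x0) (memb x0 (a :: x))) (a :: l)) (subsets l)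
     = if g a then cnt F (subsets l) else 0%nat).
  { destruct (g a) eqn:Ga.
    - apply cnt_ext. intros Q _. simpl. rewrite pt_eqb_refl, Ga. simpl.
      apply forallb_ext_in. intros x Hx. unfold memb; simpl.
      destruct (pt_eqb x a) eqn:E; [apply pt_eqb_true in E; subst; contradiction|reflexivity].
    - apply cnt_false. intros Q _. simpl. rewrite pt_eqb_refl, Ga. reflexivity. }
  assert (E2 : cnt (fun x => forallb (fun x0 => Bool.eqb (g x0) (memb x0 x)) (a :: l)) (subsets l)
     = if g a then 0%nat else cnt F (subsets l)).
  { destruct (g a) eqn:Ga.
    - apply cnt_false. intros Q HQ. simpl. rewrite Ga.
      destruct (memb a Q) eqn:E; [|reflexivity]. apply memb_In in E.
      apply subsets_incl in HQ. apply HQ in E. contradiction.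
    - apply cnt_ext. intros Q HQ. simpl. rewrite Ga.
      destruct (memb a Q) eqn:E; [|reflexivity]. apply memb_In in E.
      apply subsets_incl in HQ. apply HQ in E. contradiction. }
  unfold memb in E1, E2 |- *. simpl in E1, E2 |- *. rewrite E1, E2. unfold F; rewrite IH by auto. destruct (g a); reflexivity.
Qed.

Lemma NoDup_list_prod {A B} (la : list A) (lb : list B) :
  NoDup la -> NoDup lb -> NoDup (list_prod la lb).
Proof.
  induction la as [|a la IH]; intros Ha Hb; simpl; [constructor|].
  inversion Ha; subst. apply NoDup_app.
  - apply FinFun.Injective_map_NoDup; auto. intros x y E; injection E; auto.
  - apply IH; auto.
  - intros z Hz1 Hz2. apply in_map_iff in Hz1. destruct Hz1 as [b [<- _]].
    apply in_prod_iff in Hz2. tauto.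
Qed.

Lemma zrange_NoDup K : NoDup (zrange K).
Proof.
  unfold zrange. apply FinFun.Injective_map_NoDup; [|apply seq_NoDup].
  intros x y E. lia.
Qed.

Lemma ball_pts_NoDup r : NoDup (ball_pts r).
Proof. unfold ball_pts. apply NoDup_filter, NoDup_list_prod; apply zrange_NoDup. Qed.

Definition good (P : list pt) (t : pt) : bool := forallb (fun x => inV (pt_add x t)) P.

Lemma patch_count r P t : (forall x, In x P -> In x (ball_pts r)) ->
  cnt (fun Q => patch_eqb r t Q) (filter (fun Q => inclb P Q) (subsets (ball_pts r)))
  = if good P t then 1%nat else 0%nat.
Proof.
  intros HP. rewrite cnt_filter.
  transitivity (cnt (fun Q => andb (good P t) (patch_eqb r t Q)) (subsets (ball_pts r))).
  - apply cnt_ext. intros Q HQ. destruct (patch_eqb r t Q) eqn:E.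
    2: now rewrite !Bool.andb_false_r.
    rewrite !Bool.andb_true_r. unfold inclb, good. apply forallb_ext_in.
    intros x Hx. unfold patch_eqb in E. rewrite forallb_forall in E.
    specialize (E x (HP x Hx)). apply Bool.eqb_prop in E. auto.
  - destruct (good P t); simpl.
    + apply subsets_unique, ball_pts_NoDup.
    + apply cnt_false; auto.
Qed.

Lemma nsum_ind_cnt {A} (f : A -> bool) l : nsum (map (fun t => if f t then 1%nat else 0%nat) l) = cnt f l.
Proof. induction l; simpl; auto. rewrite cnt_cons, IHl. auto. Qed.

Section PartB.
Local Open Scope R_scope.

Lemma sum_div {A} (c : A -> nat) (n : R) l :
  fold_right Rplus 0%R (map (fun Q => INR (c Q) / n) l) = INR (nsum (map c l)) / n.
Proof.
  induction l; simpl; [unfold Rdiv; ring|]. rewrite IHl, plus_INR. unfold Rdiv; ring.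
Qed.

Lemma nuB_seq_eq r P N : (forall x, In x P -> In x (ball_pts r)) ->
  fold_right Rplus 0%R (map (fun Q => dens_seq r Q N) (filter (fun Q => inclb P Q) (subsets (ball_pts r))))
  = INR (cnt (good P) (ball_pts (INR N))) / INR (length (ball_pts (INR N))).
Proof.
  intros HP. unfold dens_seq.
  rewrite (sum_div (fun Q => length (filter (fun t => patch_eqb r t Q) (ball_pts (INR N))))).
  f_equal. f_equal.
  change (nsum (map (fun Q => cnt (fun t => patch_eqb r t Q) (ball_pts (INR N)))
     (filter (fun Q => inclb P Q) (subsets (ball_pts r)))) = cnt (good P) (ball_pts (INR N))).
  rewrite (nsum_swap (fun Q t => patch_eqb r t Q)).
  rewrite <- nsum_ind_cnt. apply nsum_ext. intros t _. apply patch_count; auto.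
Qed.

Lemma sum_cv {A} (u : A -> nat -> R) (d : A -> R) l :
  (forall Q, In Q l -> Un_cv (u Q) (d Q)) ->
  Un_cv (fun N => fold_right Rplus 0%R (map (fun Q => u Q N) l)) (fold_right Rplus 0%R (map d l)).
Proof.
  induction l; simpl; intros H.
  - intros e He; exists 0%nat; intros; unfold R_dist; rewrite Rminus_diag, Rabs_R0; auto.
  - apply CV_plus; auto.
Qed.

Lemma nuB_limit r P d : is_patch r P ->
  (forall Q, In Q (subsets (ball_pts r)) -> Un_cv (dens_seq r Q) (d Q)) ->
  Un_cv (fun N => INR (cnt (good P) (ball_pts (INR N))) / INR (length (ball_pts (INR N)))) (nuB r P d).
Proof.
  intros [t0 Ht0] Hd.
  assert (HP : forall x, In x P -> In x (ball_pts r)) by (intros x Hx; apply Ht0; auto).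
  unfold nuB. eapply Un_cv_ext.
  2: { apply (sum_cv (fun Q => dens_seq r Q)). intros Q HQ. apply filter_In in HQ. apply Hd; tauto. }
  intros N. apply nuB_seq_eq; auto.
Qed.

End PartB.

Lemma zrange_In K z : (0 <= K)%Z -> In z (zrange K) <-> (- K <= z <= K)%Z.
Proof.
  intros HK. unfold zrange. rewrite in_map_iff. split.
  - intros [n [<- Hn]]. apply in_seq in Hn. lia.
  - intros Hz. exists (Z.to_nat (z + K)). split; [lia|]. apply in_seq. lia.
Qed.

Lemma zrange_length K : (0 <= K)%Z -> length (zrange K) = Z.to_nat (2 * K + 1).
Proof. intros. unfold zrange. rewrite length_map, length_seq. reflexivity. Qed.

Lemma up_INR N : up (INR N) = (Z.of_nat N + 1)%Z.
Proof. symmetry. apply up_tech; rewrite INR_IZR_INZ; [lra|]. rewrite plus_IZR. lra. Qed.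

Lemma inball_iff N x y : inballb (INR N) (x, y) = true <-> (x * x + y * y <= Z.of_nat N * Z.of_nat N)%Z.
Proof.
  unfold inballb; simpl. rewrite INR_IZR_INZ.
  destruct (Rle_dec _ _) as [H|H]; split; intros H'; try discriminate; auto.
  - apply le_IZR. rewrite plus_IZR, !mult_IZR. lra.
  - exfalso; apply H. apply IZR_le in H'. rewrite plus_IZR, !mult_IZR in H'. lra.
Qed.

Lemma ball_mem N x y : In (x, y) (ball_pts (INR N)) <-> (x * x + y * y <= Z.of_nat N * Z.of_nat N)%Z.
Proof.
  unfold ball_pts. rewrite up_INR. rewrite filter_In, in_prod_iff, !zrange_In by lia.
  rewrite inball_iff. split; [tauto|]. intros H. nia.
Qed.

Definition S (N : nat) := ball_pts (INR N).
Definition K (N : nat) := (Z.of_nat N + 1)%Z.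

Lemma S_def N : S N = filter (inballb (INR N)) (list_prod (zrange (K N)) (zrange (K N))).
Proof. unfold S, ball_pts, K. rewrite up_INR. f_equal. f_equal; f_equal; lia. Qed.

Lemma S_lower N : (N * N <= length (S N))%nat.
Proof.
  set (h := (Z.of_nat N / 2)%Z).
  assert (Hh : (0 <= h /\ Z.of_nat N <= 2 * h + 1 /\ 2 * h <= Z.of_nat N)%Z).
  { unfold h. pose proof (Z.div_mod (Z.of_nat N) 2 ltac:(lia)). pose proof (Z.mod_pos_bound (Z.of_nat N) 2 ltac:(lia)). lia. }
  pose proof (cnt_inj (fun _ : pt => true) (fun _ : pt => true) (fun t => t)
    (list_prod (zrange h) (zrange h)) (S N)) as H.
  unfold cnt in H. rewrite !filter_true in H. 
  assert (Hl : length (list_prod (zrange h) (zrange h)) = (Z.to_nat (2*h+1) * Z.to_nat (2*h+1))%nat).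
  { rewrite length_prod, zrange_length by lia. reflexivity. }
  specialize (H ltac:(apply NoDup_list_prod; apply zrange_NoDup) ltac:(auto)).
  assert (H2 : (length (list_prod (zrange h) (zrange h)) <= length (S N))%nat).
  { apply H. intros [x y] Hx _; split; auto. unfold S; apply ball_mem. apply in_prod_iff in Hx. rewrite !zrange_In in Hx by lia. nia. }
  assert (N <= Z.to_nat (2*h+1))%nat by lia. nia.
Qed.

Definition cls (m : Z) (t : pt) : pt := (fst t mod m, snd t mod m)%Z.

Lemma cnt_split {A} (f g : A -> bool) l : (cnt f l <= cnt (fun t => andb (f t) (g t)) l + cnt (fun t => negb (g t)) l)%nat.
Proof.
  eapply Nat.le_trans; [|apply cnt_or]. apply cnt_mono. intros x _ H. rewrite H. destruct (g x); auto.
Qed.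

Lemma cls_add m a t d : cls m a = cls m t -> cls m (pt_add a d) = cls m (pt_add t d).
Proof.
  destruct a as [a1 a2], t as [t1 t2], d as [d1 d2]; unfold cls, pt_add; simpl. intros E; injection E; intros E2 E1.
  rewrite (Zplus_mod a1), (Zplus_mod t1), (Zplus_mod a2), (Zplus_mod t2), E1, E2. reflexivity.
Qed.

Lemma shift_le m a d N :
  (cnt (fun t => pt_eqb (cls m a) (cls m t)) (S N) <=
   cnt (fun t => pt_eqb (cls m (pt_add a d)) (cls m t)) (S N) +
   cnt (fun t => negb (memb (pt_add t d) (S N))) (S N))%nat.
Proof.
  eapply Nat.le_trans; [apply (cnt_split _ (fun t => memb (pt_add t d) (S N)))|].
  apply Nat.add_le_mono_r. apply cnt_inj with (h := fun t => pt_add t d).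
  - apply ball_pts_NoDup.
  - intros [x1 x2] [y1 y2] _ _ _ _ E. unfold pt_add in E; simpl in E. injection E; intros. f_equal; lia.
  - intros t _ H. apply Bool.andb_true_iff in H. destruct H as [H1 H2]. split; [apply memb_In; auto|].
    apply pt_eqb_true. apply pt_eqb_true in H1. apply cls_add; auto.
Qed.

Lemma count1D (L : list Z) (p : Z -> bool) (m : Z) : NoDup L -> (1 <= m)%Z ->
  (forall x x', In x L -> In x' L -> p x = true -> p x' = true -> (x < x')%Z -> (x' - x < m)%Z) ->
  (cnt p L <= Z.to_nat m)%nat.
Proof.
  intros Hnd Hm H.
  assert (E : cnt (fun _ : nat => true) (seq 0 (Z.to_nat m)) = Z.to_nat m) by (unfold cnt; rewrite filter_true, length_seq; auto).
  rewrite <- E. apply cnt_inj with (h := fun x => Z.to_nat (x mod m)); auto.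
  - intros x x' Hx Hx' px px' Ex.
    pose proof (Z.mod_pos_bound x m ltac:(lia)). pose proof (Z.mod_pos_bound x' m ltac:(lia)).
    assert (Em : (x mod m = x' mod m)%Z) by lia.
    pose proof (Z.div_mod x m ltac:(lia)). pose proof (Z.div_mod x' m ltac:(lia)).
    set (q := (x / m)%Z) in *. set (q' := (x' / m)%Z) in *.
    destruct (Z.lt_trichotomy x x') as [Hl|[Hl|Hl]]; auto.
    + specialize (H x x' Hx Hx' px px' Hl).
      assert (0 < m * (q' - q) < m)%Z by lia.
      assert (0 < q' - q)%Z by nia. assert (q' - q < 1)%Z by nia. lia.
    + specialize (H x' x Hx' Hx px' px Hl).
      assert (0 < m * (q - q') < m)%Z by lia.
      assert (0 < q - q')%Z by nia. assert (q - q' < 1)%Z by nia. lia.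
  - intros x _ _. split; auto. apply in_seq. pose proof (Z.mod_pos_bound x m ltac:(lia)). lia.
Qed.

Lemma zr_len N : length (zrange (K N)) = (2 * N + 3)%nat.
Proof. rewrite zrange_length by (unfold K; lia). unfold K. lia. Qed.

Lemma bad_h m d N : (1 <= m)%Z -> (0 <= d <= m)%Z ->
  (cnt (fun t => negb (memb (pt_add t (d, 0%Z)) (S N))) (S N) <= Z.to_nat m * (2 * N + 3))%nat.
Proof.
  intros Hm Hd. assert (ES : forall f, cnt f (S N) = cnt f (filter (inballb (INR N)) (list_prod (zrange (K N)) (zrange (K N))))) by (intros; rewrite S_def; auto).
  rewrite ES, cnt_filter, (@cnt_prod Z Z). cbv beta.
  rewrite (nsum_swap (fun x y => andb (inballb (INR N) (x, y)) (negb (memb (pt_add (x, y) (d, 0%Z)) (S N))))).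
  rewrite <- zr_len, <- nsum_const. apply nsum_le. intros y _.
  apply count1D; auto using zrange_NoDup.
  intros x x' _ _ H1 H2 Hl. apply Bool.andb_true_iff in H1, H2.
  destruct H1 as [B1 M1], H2 as [B2 M2]. apply inball_iff in B1, B2.
  destruct (Z_lt_le_dec (x' - x) m) as [|Hc]; auto. exfalso.
  apply Bool.negb_true_iff in M1. apply Bool.not_true_iff_false in M1. apply M1.
  apply memb_In. unfold pt_add; simpl. unfold S; apply ball_mem.
  destruct (Z_le_gt_dec 0 (x + d)).
  - assert ((x + d) * (x + d) <= x' * x')%Z by nia. lia.
  - assert ((x + d) * (x + d) <= x * x)%Z by nia. lia.
Qed.

Lemma bad_v m d N : (1 <= m)%Z -> (0 <= d <= m)%Z ->
  (cnt (fun t => negb (memb (pt_add t (0%Z, d)) (S N))) (S N) <= Z.to_nat m * (2 * N + 3))%nat.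
Proof.
  intros Hm Hd. assert (ES : forall f, cnt f (S N) = cnt f (filter (inballb (INR N)) (list_prod (zrange (K N)) (zrange (K N))))) by (intros; rewrite S_def; auto).
  rewrite ES, cnt_filter, (@cnt_prod Z Z). cbv beta.
  rewrite <- zr_len, <- nsum_const. apply nsum_le. intros x _.
  apply count1D; auto using zrange_NoDup.
  intros y y' _ _ H1 H2 Hl. apply Bool.andb_true_iff in H1, H2.
  destruct H1 as [B1 M1], H2 as [B2 M2]. apply inball_iff in B1, B2.
  destruct (Z_lt_le_dec (y' - y) m) as [|Hc]; auto. exfalso.
  apply Bool.negb_true_iff in M1. apply Bool.not_true_iff_false in M1. apply M1.
  apply memb_In. unfold pt_add; simpl. unfold S; apply ball_mem.
  destruct (Z_le_gt_dec 0 (y + d)).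
  - assert ((y + d) * (y + d) <= y' * y')%Z by nia. lia.
  - assert ((y + d) * (y + d) <= y * y)%Z by nia. lia.
Qed.

Definition zr (m : nat) : list Z := map Z.of_nat (seq 0 m).
Definition box (m : nat) : list pt := list_prod (zr m) (zr m).

Lemma zr_In m z : In z (zr m) <-> (0 <= z < Z.of_nat m)%Z.
Proof.
  unfold zr. rewrite in_map_iff. split.
  - intros [n [<- Hn]]. apply in_seq in Hn. lia.
  - intros Hz. exists (Z.to_nat z). split; [lia|]. apply in_seq. lia.
Qed.

Lemma zr_NoDup m : NoDup (zr m).
Proof. unfold zr. apply FinFun.Injective_map_NoDup; [intros x y E; lia|apply seq_NoDup]. Qed.

Lemma zr_length m : length (zr m) = m.
Proof. unfold zr. rewrite length_map, length_seq; auto. Qed.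

Lemma box_NoDup m : NoDup (box m).
Proof. apply NoDup_list_prod; apply zr_NoDup. Qed.

Lemma box_length m : length (box m) = (m * m)%nat.
Proof. unfold box. rewrite (@length_prod Z Z), zr_length. auto. Qed.

Lemma box_In m a : In a (box m) <-> (0 <= fst a < Z.of_nat m /\ 0 <= snd a < Z.of_nat m)%Z.
Proof. destruct a; unfold box; rewrite (@in_prod_iff Z Z), !zr_In; simpl; tauto. Qed.

Lemma cls_in_box m t : (1 <= m)%nat -> In (cls (Z.of_nat m) t) (box m).
Proof.
  intros Hm. apply box_In. unfold cls; simpl.
  pose proof (Z.mod_pos_bound (fst t) (Z.of_nat m) ltac:(lia)).
  pose proof (Z.mod_pos_bound (snd t) (Z.of_nat m) ltac:(lia)). lia.
Qed.

Lemma cls_box_id m a : In a (box m) -> cls (Z.of_nat m) a = a.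
Proof.
  intros H. apply box_In in H. destruct a as [a1 a2]; unfold cls; simpl in *.
  rewrite !Z.mod_small by lia. auto.
Qed.

Definition c (m N : nat) (a : pt) : nat := cnt (fun t => pt_eqb a (cls (Z.of_nat m) t)) (S N).

Lemma c_shift m N a b : (1 <= m)%nat -> In a (box m) -> In b (box m) ->
  (c m N a <= c m N b + 2 * m * (2 * N + 3))%nat.
Proof.
  intros Hm Ha Hb. set (M := Z.of_nat m).
  set (d1 := ((fst b - fst a) mod M)%Z). set (d2 := ((snd b - snd a) mod M)%Z).
  assert (Hd1 : (0 <= d1 <= M)%Z) by (pose proof (Z.mod_pos_bound (fst b - fst a) M ltac:(lia)); unfold d1; lia).
  assert (Hd2 : (0 <= d2 <= M)%Z) by (pose proof (Z.mod_pos_bound (snd b - snd a) M ltac:(lia)); unfold d2; lia).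
  unfold c. rewrite (cnt_ext _ (fun t => pt_eqb (cls M a) (cls M t))) by (intros t _; unfold M; rewrite (cls_box_id m a Ha); auto).
  pose proof (shift_le M a (d1, 0%Z) N) as S1.
  pose proof (shift_le M (pt_add a (d1, 0%Z)) (0%Z, d2) N) as S2.
  pose proof (bad_h M d1 N ltac:(lia) Hd1) as B1.
  pose proof (bad_v M d2 N ltac:(lia) Hd2) as B2.
  assert (Eb : cls M (pt_add (pt_add a (d1, 0%Z)) (0%Z, d2)) = b).
  { assert (Hb' := Hb). apply box_In in Hb'. destruct a as [a1 a2], b as [b1 b2]; unfold cls, pt_add; simpl in *.
    unfold d1, d2; simpl. f_equal.
    - rewrite Z.add_0_r, Zplus_mod_idemp_r. replace (a1 + (b1 - a1))%Z with b1 by ring. apply Z.mod_small; lia.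
    - rewrite Z.add_0_r, Zplus_mod_idemp_r. replace (a2 + (b2 - a2))%Z with b2 by ring. apply Z.mod_small; lia. }
  rewrite Eb in S2. unfold M in *. rewrite Nat2Z.id in B1, B2. lia.
Qed.

Lemma sum_c m N : (1 <= m)%nat -> nsum (map (c m N) (box m)) = length (S N).
Proof.
  intros Hm. unfold c.
  rewrite (nsum_swap (fun a t => pt_eqb a (cls (Z.of_nat m) t))).
  rewrite <- (Nat.mul_1_l (length (S N))), <- nsum_const. apply nsum_ext.
  intros t _. apply cnt_eq_one; [apply box_NoDup|apply cls_in_box; auto].
Qed.

Lemma cnt_periodic m N (X : pt -> bool) : (1 <= m)%nat ->
  (forall t, X t = X (cls (Z.of_nat m) t)) ->
  cnt X (S N) = nsum (map (fun a => if X a then c m N a else 0%nat) (box m)).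
Proof.
  intros Hm HX. unfold c.
  transitivity (nsum (map (fun a => cnt (fun t => andb (X a) (pt_eqb a (cls (Z.of_nat m) t))) (S N)) (box m))).
  - rewrite (nsum_swap (fun a t => andb (X a) (pt_eqb a (cls (Z.of_nat m) t)))).
    rewrite <- nsum_ind_cnt. apply nsum_ext. intros t _.
    rewrite HX. transitivity (cnt (fun a => andb (X (cls (Z.of_nat m) t)) (pt_eqb a (cls (Z.of_nat m) t))) (box m)).
    + destruct (X (cls (Z.of_nat m) t)); simpl.
      * symmetry; apply cnt_eq_one; [apply box_NoDup|apply cls_in_box; auto].
      * symmetry; apply cnt_false; auto.
    + apply cnt_ext. intros a _. destruct (pt_eqb a (cls (Z.of_nat m) t)) eqn:E.
      * apply pt_eqb_true in E. subst. auto.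
      * rewrite !Bool.andb_false_r; auto.
  - apply nsum_ext. intros a _. destruct (X a); simpl; auto. apply cnt_false; auto.
Qed.

Lemma nsum_if_const {A} (X : A -> bool) (k : nat) l :
  nsum (map (fun a => if X a then k else 0%nat) l) = (k * cnt X l)%nat.
Proof. induction l; simpl; [unfold cnt; simpl; lia|]. rewrite cnt_cons, IHl. destruct (X a); lia. Qed.

Lemma equidist m N (X : pt -> bool) : (1 <= m)%nat ->
  (forall t, X t = X (cls (Z.of_nat m) t)) ->
  let G := cnt X (box m) in let n := length (S N) in let D := (2 * m * (2 * N + 3))%nat in
  ((m * m) * cnt X (S N) <= G * n + G * (m * m) * D /\ G * n <= (m * m) * cnt X (S N) + G * (m * m) * D)%nat.
Proof.
  intros Hm HX G n D.
  assert (Up : forall a, In a (box m) -> ((m * m) * c m N a <= n + (m * m) * D)%nat).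
  { intros a Ha. unfold n. rewrite <- (sum_c m N Hm).
    assert (E1 : (m * m * c m N a = nsum (map (fun _ => c m N a) (box m)))%nat) by (rewrite nsum_const, box_length; lia).
    assert (E2 : (m * m * D = nsum (map (fun _ => D) (box m)))%nat) by (rewrite nsum_const, box_length; lia).
    rewrite E1, E2, <- nsum_plus. apply nsum_le. intros b Hb. apply c_shift; auto. }
  assert (Lo : forall a, In a (box m) -> (n <= (m * m) * (c m N a + D))%nat).
  { intros a Ha. unfold n. rewrite <- (sum_c m N Hm).
    assert (E1 : (m * m * (c m N a + D) = nsum (map (fun _ => (c m N a + D)%nat) (box m)))%nat) by (rewrite nsum_const, box_length; lia).
    rewrite E1. apply nsum_le. intros b Hb. apply c_shift; auto. }
  rewrite (cnt_periodic m N X Hm HX). rewrite <- nsum_scal.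
  split.
  - eapply Nat.le_trans.
    + apply (nsum_le _ (fun a => if X a then (n + m * m * D)%nat else 0%nat)).
      intros a Ha. destruct (X a); [apply Up; auto|lia].
    + rewrite nsum_if_const. unfold G. lia.
  - assert (E : (G * n = nsum (map (fun a => if X a then n else 0%nat) (box m)))%nat)
      by (rewrite nsum_if_const; unfold G; lia).
    assert (E2 : (G * (m * m) * D = nsum (map (fun a => if X a then (m * m * D)%nat else 0%nat) (box m)))%nat)
      by (rewrite nsum_if_const; unfold G; lia).
    rewrite E, E2, <- nsum_plus. apply nsum_le. intros a Ha. destruct (X a); [|lia].
    specialize (Lo a Ha). lia.
Qed.

Definition divb (p a : Z) : bool := Z.eqb (a mod p) 0.
Definition hit (p : Z) (t x : pt) : bool := andb (divb p (fst t + fst x)) (divb p (snd t + snd x)).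
Definition condp (P : list pt) (p : Z) (t : pt) : bool := forallb (fun x => negb (hit p t x)) P.
Definition Aps (P : list pt) (ps : list nat) (t : pt) : bool := forallb (fun p => condp P (Z.of_nat p) t) ps.
Definition prodl (ps : list nat) : nat := fold_right mult 1%nat ps.

Lemma mod_inj (Q u v k k' : Z) : (1 <= Q)%Z -> Z.gcd Q v = 1%Z -> (0 <= k < Q)%Z -> (0 <= k' < Q)%Z ->
  ((u + v * k) mod Q = (u + v * k') mod Q)%Z -> k = k'.
Proof.
  intros HQ Hg Hk Hk' E.
  assert (H : (Q | v * (k - k'))%Z).
  { apply Z.mod_divide; [lia|]. replace (v * (k - k'))%Z with ((u + v * k) - (u + v * k'))%Z by ring.
    rewrite Zminus_mod, E, Z.sub_diag. reflexivity. }
  apply Z.gauss in H; auto.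
  destruct (Z.eq_dec (k - k') 0) as [|Hne]; [lia|].
  apply Zdivide_bounds in H; auto. lia.
Qed.

Lemma perm_affine (q : nat) (u : pt) (v : Z) : (1 <= q)%nat -> Z.gcd (Z.of_nat q) v = 1%Z ->
  Permutation (map (fun k => cls (Z.of_nat q) (fst u + v * fst k, snd u + v * snd k)%Z) (box q)) (box q).
Proof.
  intros Hq Hg. apply Permutation_map_same_l.
  - apply FinFun.Injective_map_NoDup_in; [|apply box_NoDup].
    intros [k1 k2] [k1' k2'] Hk Hk' E. apply box_In in Hk, Hk'. simpl in *.
    unfold cls in E; simpl in E. injection E; intros E2 E1.
    f_equal; eapply mod_inj; eauto; lia.
  - intros y Hy. apply in_map_iff in Hy. destruct Hy as [k [<- _]]. apply cls_in_box; auto.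
Qed.

Lemma condp_cls P q t : (1 <= q)%Z -> condp P q t = condp P q (cls q t).
Proof.
  intros Hq. unfold condp. apply forallb_ext_in. intros x _. unfold hit, divb, cls; simpl.
  rewrite !Zplus_mod_idemp_l. reflexivity.
Qed.

Lemma divb_shift p a b : divb p (a + b * p) = divb p a.
Proof. unfold divb. rewrite Z_mod_plus_full. reflexivity. Qed.

Lemma prodl_div p ps : In p ps -> Nat.divide p (prodl ps).
Proof.
  induction ps as [|a ps IH]; simpl; [tauto|]. intros [<-|H].
  - exists (prodl ps). lia.
  - destruct (IH H) as [r Hr]. exists (a * r)%nat. rewrite Hr. lia.
Qed.

Lemma Aps_shift P ps (i k : pt) : 
  Aps P ps (fst i + Z.of_nat (prodl ps) * fst k, snd i + Z.of_nat (prodl ps) * snd k)%Z = Aps P ps i.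
Proof.
  unfold Aps. apply forallb_ext_in. intros p Hp. destruct (prodl_div p ps Hp) as [r Hr].
  unfold condp. apply forallb_ext_in. intros x _. unfold hit; simpl. rewrite Hr, Nat2Z.inj_mul.
  replace (fst i + Z.of_nat r * Z.of_nat p * fst k + fst x)%Z with (fst i + fst x + (Z.of_nat r * fst k) * Z.of_nat p)%Z by ring.
  replace (snd i + Z.of_nat r * Z.of_nat p * snd k + snd x)%Z with (snd i + snd x + (Z.of_nat r * snd k) * Z.of_nat p)%Z by ring.
  rewrite !divb_shift. reflexivity.
Qed.

Definition F (m : Z) (IK : pt * pt) : pt :=
  (fst (fst IK) + m * fst (snd IK), snd (fst IK) + m * snd (snd IK))%Z.

Lemma decomp_inj (m i i' k k' : Z) : (0 <= i < m)%Z -> (0 <= i' < m)%Z -> (0 <= k)%Z -> (0 <= k')%Z ->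
  (i + m * k = i' + m * k')%Z -> i = i' /\ k = k'.
Proof.
  intros Hi Hi' Hk Hk' E.
  destruct (Z.lt_trichotomy k k') as [H|[H|H]].
  - assert (m * k + m <= m * k')%Z by nia. lia.
  - subst. lia.
  - assert (m * k' + m <= m * k)%Z by nia. lia.
Qed.

Lemma box_split q m : (1 <= q)%nat -> (1 <= m)%nat ->
  Permutation (map (F (Z.of_nat m)) (list_prod (box m) (box q))) (box (q * m)).
Proof.
  intros Hq Hm. apply NoDup_Permutation_bis.
  - apply FinFun.Injective_map_NoDup_in; [|apply NoDup_list_prod; apply box_NoDup].
    intros [[i1 i2] [k1 k2]] [[i1' i2'] [k1' k2']] H H' E.
    apply in_prod_iff in H, H'. destruct H as [Hi Hk], H' as [Hi' Hk'].
    apply box_In in Hi, Hk, Hi', Hk'. simpl in *. unfold F in E; simpl in E. injection E; intros E2 E1.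
    destruct (decomp_inj (Z.of_nat m) i1 i1' k1 k1') as [-> ->]; try lia.
    destruct (decomp_inj (Z.of_nat m) i2 i2' k2 k2') as [-> ->]; try lia. auto.
  - rewrite length_map, length_prod, !box_length. nia.
  - intros y Hy. apply in_map_iff in Hy. destruct Hy as [[[i1 i2] [k1 k2]] [<- H]].
    apply in_prod_iff in H. destruct H as [Hi Hk]. apply box_In in Hi, Hk. simpl in *.
    apply box_In. unfold F; simpl. rewrite Nat2Z.inj_mul. nia.
Qed.

Lemma cnt_compl {A} (f : A -> bool) l : (cnt f l + cnt (fun x => negb (f x)) l)%nat = length l.
Proof. induction l; simpl; auto. rewrite !cnt_cons. destruct (f a); simpl; lia. Qed.

Lemma divides_mod_eq (Q x b : Z) : (1 <= Q)%Z -> (0 <= b < Q)%Z -> ((- b + x) mod Q = 0 <-> x mod Q = b)%Z.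
Proof.
  intros HQ Hb. rewrite Z.mod_divide by lia. split.
  - intros [c Hc]. replace x with (b + c * Q)%Z by lia. rewrite Z_mod_plus_full. apply Z.mod_small; lia.
  - intros E. exists (x / Q)%Z. pose proof (Z.div_mod x Q ltac:(lia)). lia.
Qed.

Definition PPmod (q : nat) (P : list pt) : list pt :=
  nodup pt_eq_dec (map (fun x => (Z.modulo (fst x) (Z.of_nat q), Z.modulo (snd x) (Z.of_nat q))) P).

Lemma condp_neg P q b : (1 <= q)%nat -> In b (box q) ->
  condp P (Z.of_nat q) (- fst b, - snd b)%Z = negb (memb b (PPmod q P)).
Proof.
  intros Hq Hb. apply box_In in Hb. destruct b as [b1 b2]; simpl in *.
  destruct (memb (b1, b2) (PPmod q P)) eqn:E; simpl.
  - apply memb_In in E. unfold PPmod in E. rewrite nodup_In, in_map_iff in E.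
    destruct E as [x [Ex Hx]]. injection Ex; intros E2 E1.
    unfold condp. apply Bool.not_true_iff_false. rewrite forallb_forall. intros H.
    specialize (H x Hx). unfold hit, divb in H; simpl in H.
    rewrite (proj2 (divides_mod_eq (Z.of_nat q) (fst x) b1 ltac:(lia) ltac:(lia)) E1) in H.
    rewrite (proj2 (divides_mod_eq (Z.of_nat q) (snd x) b2 ltac:(lia) ltac:(lia)) E2) in H. discriminate.
  - unfold condp. apply forallb_forall. intros x Hx. apply Bool.negb_true_iff.
    unfold hit, divb; simpl. destruct (Z.eqb_spec ((- b1 + fst x) mod Z.of_nat q) 0) as [H1|H1]; auto.
    destruct (Z.eqb_spec ((- b2 + snd x) mod Z.of_nat q) 0) as [H2|H2]; auto.
    apply (divides_mod_eq (Z.of_nat q) (fst x) b1) in H1; try lia. apply (divides_mod_eq (Z.of_nat q) (snd x) b2) in H2; try lia. exfalso. apply Bool.not_true_iff_false in E. apply E.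
    apply memb_In. unfold PPmod. rewrite nodup_In, in_map_iff. exists x. split; auto. rewrite H1, H2; auto.
Qed.

Lemma count_prime P q : (1 <= q)%nat -> cnt (condp P (Z.of_nat q)) (box q) = (q * q - card_mod q P)%nat.
Proof.
  intros Hq.
  rewrite <- (cnt_perm _ _ _ (perm_affine q (0%Z, 0%Z) (-1)%Z Hq ltac:(change (-1)%Z with (- (1))%Z; rewrite Z.gcd_opp_r, Z.gcd_1_r; auto))).
  rewrite cnt_map. simpl.
  rewrite (cnt_ext _ (fun b => negb (memb b (PPmod q P)))).
  2: { intros b Hb. rewrite <- condp_cls by lia. rewrite <- condp_neg by auto. f_equal. }
  pose proof (cnt_compl (fun b => memb b (PPmod q P)) (box q)) as H.
  rewrite cnt_memb in H.
  - rewrite box_length in H. unfold card_mod. fold (PPmod q P). lia.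
  - apply box_NoDup.
  - apply NoDup_nodup.
  - intros y Hy. unfold PPmod in Hy. rewrite nodup_In, in_map_iff in Hy. destruct Hy as [x [<- _]].
    apply (cls_in_box q x Hq).
Qed.

Lemma prodl_pos ps : (forall p, In p ps -> 1 <= p)%nat -> (1 <= prodl ps)%nat.
Proof. induction ps; simpl; intros H; auto. assert (1 <= prodl ps)%nat by (apply IHps; intros; apply H; right; auto). specialize (H a (or_introl eq_refl)). nia. Qed.

Lemma gcd_prodl q ps : prime (Z.of_nat q) -> (forall p, In p ps -> prime (Z.of_nat p)) -> ~ In q ps ->
  Z.gcd (Z.of_nat q) (Z.of_nat (prodl ps)) = 1%Z.
Proof.
  intros Hq; induction ps as [|p ps IH]; intros Hps Hn; simpl.
  - apply Z.gcd_1_r.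
  - rewrite Nat2Z.inj_mul. apply Zgcd_1_rel_prime. apply rel_prime_mult.
    + apply prime_rel_prime; auto. intros Hd. apply prime_div_prime in Hd; auto.
      * apply Hn; left; lia.
      * apply Hps; left; auto.
    + apply Zgcd_1_rel_prime. apply IH; [intros; apply Hps; right; auto|intro; apply Hn; right; auto].
Qed.

Lemma count_Aps P ps : NoDup ps -> (forall p, In p ps -> prime (Z.of_nat p)) ->
  cnt (Aps P ps) (box (prodl ps)) = fold_right mult 1%nat (map (fun p => p * p - card_mod p P)%nat ps).
Proof.
  induction ps as [|q ps IH]; intros Hnd Hpr.
  - reflexivity.
  - inversion Hnd; subst.
    assert (Hq : prime (Z.of_nat q)) by (apply Hpr; left; auto).
    assert (Hq1 : (1 <= q)%nat) by (pose proof (prime_ge_2 _ Hq); lia).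
    assert (Hps : forall p, In p ps -> prime (Z.of_nat p)) by (intros; apply Hpr; right; auto).
    assert (Hm : (1 <= prodl ps)%nat).
    { apply prodl_pos. intros p Hp. pose proof (prime_ge_2 _ (Hps p Hp)). lia. }
    set (m := prodl ps) in *. simpl prodl. fold m.
    rewrite <- (cnt_perm _ _ _ (box_split q m Hq1 Hm)). rewrite cnt_map.
    rewrite (@cnt_prod pt pt). cbv beta.
    transitivity (nsum (map (fun I => if Aps P ps I then (q * q - card_mod q P)%nat else 0%nat) (box m))).
    + apply nsum_ext. intros I HI.
      rewrite (cnt_ext _ (fun K => andb (condp P (Z.of_nat q) (cls (Z.of_nat q) (F (Z.of_nat m) (I, K)))) (Aps P ps I))).
      2: { intros K0 _. unfold Aps at 1. simpl forallb. fold (Aps P ps).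
           rewrite <- condp_cls by lia. unfold m, F; simpl. rewrite <- (Aps_shift P ps I K0). reflexivity. }
      destruct (Aps P ps I).
      * rewrite (cnt_ext _ (fun K => condp P (Z.of_nat q) (cls (Z.of_nat q) (fst I + Z.of_nat m * fst K, snd I + Z.of_nat m * snd K)%Z))).
        2: { intros K0 _. rewrite Bool.andb_true_r. reflexivity. }
        rewrite <- (cnt_map (condp P (Z.of_nat q))).
        rewrite (cnt_perm _ _ _ (perm_affine q I (Z.of_nat m) Hq1 (gcd_prodl q ps Hq Hps H1))).
        apply count_prime; auto.
      * apply cnt_false. intros; apply Bool.andb_false_r.
    + rewrite nsum_if_const. simpl. rewrite IH; auto.
Qed.

Lemma prime_divisor_ex (n : Z) : (2 <= n)%Z -> exists p, prime p /\ (p | n)%Z /\ (2 <= p <= n)%Z.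
Proof.
  intros Hn. remember (Z.to_nat n) as k eqn:Hk. revert n Hn Hk.
  induction k as [k IH] using (well_founded_induction lt_wf). intros n Hn Hk.
  destruct (prime_dec n) as [Hp|Hp].
  - exists n. split; auto. split; [apply Z.divide_refl|lia].
  - destruct (not_prime_divide n ltac:(lia) Hp) as [d [Hd Hdn]].
    destruct (IH (Z.to_nat d) ltac:(lia) d ltac:(lia) eq_refl) as [p [Hp' [Hpd Hpb]]].
    exists p. split; auto. split; [eapply Z.divide_trans; eauto|lia].
Qed.

Definition psM (M : nat) : list nat := filter primeb (seq 2 M).

Lemma primeb_true p : primeb p = true <-> prime (Z.of_nat p).
Proof. unfold primeb. destruct (prime_dec (Z.of_nat p)); split; intros; auto; discriminate. Qed.

Lemma psM_prime M p : In p (psM M) -> prime (Z.of_nat p).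
Proof. unfold psM. rewrite filter_In. intros [_ H]. apply primeb_true; auto. Qed.

Lemma psM_NoDup M : NoDup (psM M).
Proof. apply NoDup_filter, seq_NoDup. Qed.

Lemma divb_true p a : (p <> 0)%Z -> divb p a = true <-> (p | a)%Z.
Proof. intros Hp. unfold divb. rewrite Z.eqb_eq. apply Z.mod_divide; auto. Qed.

Lemma good_AM P M t : good P t = true -> Aps P (psM M) t = true.
Proof.
  intros H. unfold Aps. apply forallb_forall. intros p Hp. apply psM_prime in Hp.
  pose proof (prime_ge_2 _ Hp).
  unfold condp. apply forallb_forall. intros x Hx. unfold good in H. rewrite forallb_forall in H.
  specialize (H x Hx). unfold inV, pt_add in H; simpl in H. apply Z.eqb_eq in H.
  apply Bool.negb_true_iff. destruct (hit (Z.of_nat p) t x) eqn:E; auto. exfalso.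
  unfold hit in E. apply Bool.andb_true_iff in E. destruct E as [E1 E2].
  apply divb_true in E1, E2; try lia.
  assert (Hd : (Z.of_nat p | Z.gcd (fst x + fst t) (snd x + snd t))%Z).
  { apply Z.gcd_greatest; rewrite Z.add_comm; auto. }
  rewrite H in Hd. apply Z.divide_pos_le in Hd; lia.
Qed.

Definition Rn (P : list pt) : nat :=
  fold_right (fun x acc => Nat.max acc (Z.to_nat (Z.abs (fst x)) + Z.to_nat (Z.abs (snd x)))) 0%nat P.

Lemma Rn_bound P x : In x P -> (Z.abs (fst x) <= Z.of_nat (Rn P) /\ Z.abs (snd x) <= Z.of_nat (Rn P))%Z.
Proof.
  induction P as [|y P IH]; simpl; [tauto|]. intros [<-|H]; [lia|]. specialize (IH H). lia.
Qed.

Lemma S_bound N t : In t (S N) -> (Z.abs (fst t) <= Z.of_nat N /\ Z.abs (snd t) <= Z.of_nat N)%Z.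
Proof. destruct t as [t1 t2]. unfold S. rewrite ball_mem. simpl. intros H. split; nia. Qed.

Lemma tail_claim P M N t : In t (S N) -> Aps P (psM M) t = true -> good P t = false ->
  exists x, In x P /\ (pt_eqb (pt_add t x) (0%Z, 0%Z) = true \/
     exists g, In g (seq (M + 2) (N + Rn P)) /\ hit (Z.of_nat g) t x = true).
Proof.
  intros Ht HA Hg. unfold good in Hg. apply Bool.not_true_iff_false in Hg.
  rewrite forallb_forall in Hg. apply Classical_Pred_Type.not_all_ex_not in Hg.
  destruct Hg as [x Hx]. apply Classical_Prop.imply_to_and in Hx. destruct Hx as [Hx Hv].
  exists x; split; auto. unfold inV, pt_add in Hv; simpl in Hv. rewrite Z.eqb_eq in Hv.
  set (a := (fst x + fst t)%Z) in *. set (b := (snd x + snd t)%Z) in *.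
  destruct (Z.eq_dec a 0) as [Ha|Ha]; [destruct (Z.eq_dec b 0) as [Hb|Hb]|].
  1: { left. apply pt_eqb_true. destruct t, x; unfold pt_add, a, b in *; simpl in *. f_equal; lia. }
  all: right.
  all: assert (Hnz : ~ (a = 0 /\ b = 0)%Z) by lia.
  all: clear Ha; try clear Hb.
  all: pose proof (Rn_bound P x Hx) as [Rx1 Rx2]; pose proof (S_bound N t Ht) as [Rt1 Rt2].
  all: set (g0 := Z.gcd a b) in *.
  all: assert (G0 : (0 <= g0)%Z) by apply Z.gcd_nonneg.
  all: assert (G1 : g0 <> 0%Z) by (intros E; apply Z.gcd_eq_0 in E; tauto).
  all: assert (Da : (g0 | a)%Z) by apply Z.gcd_divide_l.
  all: assert (Db : (g0 | b)%Z) by apply Z.gcd_divide_r.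
  all: assert (G2 : (g0 <= Z.of_nat N + Z.of_nat (Rn P))%Z)
        by (destruct (Z.eq_dec a 0) as [Ha|Ha];
            [assert (b <> 0)%Z by tauto; apply Zdivide_bounds in Db; unfold b in *; lia
            |apply Zdivide_bounds in Da; unfold a in *; lia]).
  all: destruct (Z_le_gt_dec g0 (Z.of_nat M + 1)) as [Hs|Hs].
  1,3: exfalso; destruct (prime_divisor_ex g0 ltac:(lia)) as [p [Hp [Hpd Hpb]]];
       assert (Hin : In (Z.to_nat p) (psM M))
         by (unfold psM; apply filter_In; split; [apply in_seq; lia|apply primeb_true; rewrite Z2Nat.id by lia; auto]);
       unfold Aps in HA; rewrite forallb_forall in HA; specialize (HA _ Hin);
       unfold condp in HA; rewrite forallb_forall in HA; specialize (HA x Hx);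
       rewrite Z2Nat.id in HA by lia;
       unfold hit in HA; rewrite (proj2 (divb_true p _ ltac:(lia))), (proj2 (divb_true p _ ltac:(lia))) in HA;
       [discriminate| rewrite Z.add_comm; apply (Z.divide_trans _ g0); auto
                    | rewrite Z.add_comm; apply (Z.divide_trans _ g0); auto].
  all: exists (Z.to_nat g0); split; [apply in_seq; lia|].
  all: rewrite Z2Nat.id by lia; unfold hit; rewrite (proj2 (divb_true g0 _ G1)), (proj2 (divb_true g0 _ G1)); auto;
       rewrite Z.add_comm; auto.
Qed.

Lemma nsum_ge_elem {I} (g : I -> nat) Is i : In i Is -> (g i <= nsum (map g Is))%nat.
Proof. induction Is; simpl; [tauto|]. intros [->|H]; [lia|]. specialize (IHIs H). lia. Qed.

Lemma union_bound {A I} (f : A -> bool) (h : I -> A -> bool) (Is : list I) l :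
  (forall t, In t l -> f t = true -> exists i, In i Is /\ h i t = true) ->
  (cnt f l <= nsum (map (fun i => cnt (h i) l) Is))%nat.
Proof.
  induction l as [|a l IH]; intros H; [unfold cnt; simpl; lia|].
  rewrite cnt_cons.
  rewrite (nsum_ext _ (fun i => ((if h i a then 1 else 0) + cnt (h i) l)%nat)) by (intros; apply cnt_cons).
  rewrite nsum_plus.
  assert (IH' := IH (fun t Ht => H t (or_intror Ht))).
  destruct (f a) eqn:Ea; [|lia].
  destruct (H a (or_introl eq_refl) Ea) as [i [Hi Hh]].
  pose proof (nsum_ge_elem (fun i => if h i a then 1%nat else 0%nat) Is i Hi) as Hge. simpl in Hge.
  rewrite Hh in Hge. lia.
Qed.

Lemma cnt_filter_le {A} (f g : A -> bool) l : (cnt f (filter g l) <= cnt f l)%nat.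
Proof. rewrite cnt_filter. apply cnt_mono. intros x _ H. apply Bool.andb_true_iff in H; tauto. Qed.

Lemma count_div1D (g c Kz : Z) : (1 <= g)%Z -> (0 <= Kz)%Z ->
  (cnt (fun z => divb g (z + c)) (zrange Kz) <= Z.to_nat ((2 * Kz) / g) + 1)%nat.
Proof.
  intros Hg HK.
  assert (E : cnt (fun _ : nat => true) (seq 0 (Z.to_nat ((2 * Kz) / g) + 1)) = (Z.to_nat ((2 * Kz) / g) + 1)%nat)
    by (unfold cnt; rewrite filter_true, length_seq; auto).
  rewrite <- E. apply cnt_inj with (h := fun z => Z.to_nat ((z + Kz) / g)).
  - apply zrange_NoDup.
  - intros z z' Hz Hz' H1 H2 Eq. apply zrange_In in Hz, Hz'; auto.
    apply divb_true in H1, H2; try lia.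
    assert (Eq' : ((z + Kz) / g = (z' + Kz) / g)%Z).
    { assert (0 <= (z + Kz) / g)%Z by (apply Z.div_pos; lia).
      assert (0 <= (z' + Kz) / g)%Z by (apply Z.div_pos; lia). lia. }
    assert (Em : ((z + Kz) mod g = (z' + Kz) mod g)%Z).
    { destruct H1 as [u Hu], H2 as [v Hv].
      replace (z + Kz)%Z with ((Kz - c) + u * g)%Z by lia.
      replace (z' + Kz)%Z with ((Kz - c) + v * g)%Z by lia.
      rewrite !Z_mod_plus_full. reflexivity. }
    pose proof (Z.div_mod (z + Kz) g ltac:(lia)). pose proof (Z.div_mod (z' + Kz) g ltac:(lia)). lia.
  - intros z Hz _. split; auto. apply zrange_In in Hz; auto. apply in_seq.
    assert ((z + Kz) / g <= (2 * Kz) / g)%Z by (apply Z.div_le_mono; lia).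
    assert (0 <= (z + Kz) / g)%Z by (apply Z.div_pos; lia). lia.
Qed.

Lemma count_hit N (g : Z) x : (1 <= g)%Z ->
  (cnt (fun t => hit g t x) (S N) <= (Z.to_nat ((2 * K N) / g) + 1) * (Z.to_nat ((2 * K N) / g) + 1))%nat.
Proof.
  intros Hg. set (B := (Z.to_nat ((2 * K N) / g) + 1)%nat).
  rewrite S_def. eapply Nat.le_trans; [apply cnt_filter_le|].
  rewrite (@cnt_prod Z Z). cbv beta. unfold hit; simpl.
  eapply Nat.le_trans.
  - apply (nsum_le _ (fun a => if divb g (a + fst x) then B else 0%nat)).
    intros a _. destruct (divb g (a + fst x)); simpl.
    + apply count_div1D; unfold K; lia.
    + rewrite cnt_false; auto.
  - rewrite nsum_if_const. apply Nat.mul_le_mono_l. apply count_div1D; unfold K; lia.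
Qed.

Definition Gs (P : list pt) (M N : nat) : list nat := seq (M + 2) (N + Rn P).

Lemma tail_count P M N :
  (cnt (fun t => andb (Aps P (psM M) t) (negb (good P t))) (S N) <=
   nsum (map (fun x => 1 + nsum (map (fun g => cnt (fun t => hit (Z.of_nat g) t x) (S N)) (Gs P M N))) P))%nat.
Proof.
  eapply Nat.le_trans.
  - apply (union_bound _ (fun x t => orb (pt_eqb (pt_add t x) (0%Z, 0%Z)) (existsb (fun g => hit (Z.of_nat g) t x) (Gs P M N))) P).
    intros t Ht H. apply Bool.andb_true_iff in H. destruct H as [H1 H2]. apply Bool.negb_true_iff in H2.
    destruct (tail_claim P M N t Ht H1 H2) as [x [Hx [H|[g [Hg Hh]]]]]; exists x; split; auto.
    + rewrite H; auto.
    + apply Bool.orb_true_iff; right. apply existsb_exists. exists g; auto.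
  - apply nsum_le. intros x _. eapply Nat.le_trans; [apply cnt_or|]. apply Nat.add_le_mono.
    + assert (E : cnt (fun _ : pt => true) [(0%Z, 0%Z)] = 1%nat) by reflexivity. rewrite <- E.
      apply cnt_inj with (h := fun _ => (0%Z, 0%Z)).
      * apply ball_pts_NoDup.
      * intros [a1 a2] [b1 b2] _ _ E1 E2 _. apply pt_eqb_true in E1, E2. unfold pt_add in *; simpl in *.
        injection E1; injection E2; intros. f_equal; lia.
      * intros; split; [left|]; auto.
    + apply union_bound. intros t _ H. apply existsb_exists in H. auto.
Qed.

Section PartH.
Local Open Scope R_scope.

Lemma lim_le_ev (u v : nat -> R) l1 l2 N0 :
  Un_cv u l1 -> Un_cv v l2 -> (forall N, (N0 <= N)%nat -> u N <= v N) -> l1 <= l2.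
Proof.
  intros Hu Hv H. destruct (Rle_dec l1 l2) as [|Hn]; auto. exfalso.
  set (e := (l1 - l2) / 2).
  destruct (Hu e ltac:(unfold e; lra)) as [N1 H1]. destruct (Hv e ltac:(unfold e; lra)) as [N2 H2].
  set (N := (N0 + N1 + N2)%nat). specialize (H1 N ltac:(unfold N; lia)). specialize (H2 N ltac:(unfold N; lia)).
  specialize (H N ltac:(unfold N; lia)). unfold R_dist in *.
  apply Rabs_def2 in H1, H2. unfold e in *. lra.
Qed.

Lemma bound_cv (u : nat -> R) l c :
  (forall N, (1 <= N)%nat -> Rabs (u N - l) <= c / INR N) -> Un_cv u l.
Proof.
  intros H e He.
  destruct (archimed (Rabs c / e)) as [Hup _].
  set (N0 := (Z.to_nat (up (Rabs c / e)) + 1)%nat).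
  exists N0. intros N HN. unfold R_dist.
  assert (HN1 : (1 <= N)%nat) by (unfold N0 in HN; lia).
  eapply Rle_lt_trans; [apply H; auto|].
  assert (HNpos : 0 < INR N) by (apply lt_0_INR; lia).
  assert (HNbig : Rabs c / e < INR N).
  { apply Rlt_le_trans with (IZR (up (Rabs c / e))); [lra|].
    destruct (Z_le_gt_dec 0 (up (Rabs c / e))) as [Hz|Hz].
    - rewrite <- (Z2Nat.id (up _)) by lia. rewrite <- INR_IZR_INZ. apply le_INR. unfold N0 in HN. lia.
    - apply Rle_trans with 0; [apply IZR_le; lia|lra]. }
  assert (E1 : Rabs c < e * INR N).
  { assert (Rabs c = (Rabs c / e) * e) by (field; lra). rewrite H0. rewrite (Rmult_comm e). apply Rmult_lt_compat_r; auto. }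
  assert (E2 : c / INR N <= Rabs c / INR N) by (unfold Rdiv; apply Rmult_le_compat_r; [left; apply Rinv_0_lt_compat; auto|apply RRle_abs]).
  assert (E3 : Rabs c / INR N < e).
  { apply Rmult_lt_reg_r with (INR N); auto. replace (Rabs c / INR N * INR N) with (Rabs c) by (field; lra). lra. }
  lra.
Qed.

Lemma card_le p P : (1 <= p)%nat -> (card_mod p P <= p * p)%nat.
Proof.
  intros Hp. unfold card_mod. fold (PPmod p P). rewrite <- box_length.
  apply NoDup_incl_length; [apply NoDup_nodup|].
  intros y Hy. unfold PPmod in Hy. rewrite nodup_In, in_map_iff in Hy. destruct Hy as [x [<- _]].
  apply (cls_in_box p x Hp).
Qed.

Lemma prod_formula P ps : (forall p, In p ps -> (1 <= p)%nat) ->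
  fold_right Rmult 1 (map (fun p => 1 - INR (card_mod p P) / (INR p ^ 2)) ps) =
  INR (fold_right mult 1%nat (map (fun p => (p * p - card_mod p P)%nat) ps)) / INR (prodl ps * prodl ps).
Proof.
  induction ps as [|p ps IH]; intros H; simpl.
  - field.
  - simpl in IH. rewrite IH by (intros; apply H; right; auto).
    assert (Hp : (1 <= p)%nat) by (apply H; left; auto).
    assert (Hm : (1 <= prodl ps)%nat) by (apply prodl_pos; intros; apply H; right; auto).
    rewrite !mult_INR, minus_INR by (apply card_le; auto). rewrite !mult_INR.
    assert (0 < INR p) by (apply lt_0_INR; lia). assert (0 < INR (prodl ps)) by (apply lt_0_INR; lia).
    field. lra.
Qed.

Lemma partial_prod_eq P M :
  partial_prod P M = INR (cnt (Aps P (psM M)) (box (prodl (psM M)))) / INR (prodl (psM M) * prodl (psM M)).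
Proof.
  unfold partial_prod. fold (psM M). rewrite prod_formula.
  - rewrite count_Aps; [reflexivity|apply psM_NoDup|apply psM_prime].
  - intros p Hp. pose proof (prime_ge_2 _ (psM_prime M p Hp)). lia.
Qed.

Lemma Aps_periodic P ps t : (1 <= prodl ps)%nat -> Aps P ps t = Aps P ps (cls (Z.of_nat (prodl ps)) t).
Proof.
  intros Hm. rewrite <- (Aps_shift P ps (cls (Z.of_nat (prodl ps)) t) ((fst t / Z.of_nat (prodl ps)), (snd t / Z.of_nat (prodl ps)))%Z).
  f_equal. destruct t as [t1 t2]; unfold cls; simpl.
  pose proof (Z.div_mod t1 (Z.of_nat (prodl ps)) ltac:(lia)). pose proof (Z.div_mod t2 (Z.of_nat (prodl ps)) ltac:(lia)).
  f_equal; lia.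
Qed.

Lemma div_le_compat (a b c : R) : 0 < c -> a <= b -> a / c <= b / c.
Proof. intros Hc H. unfold Rdiv. apply Rmult_le_compat_r; auto. left; apply Rinv_0_lt_compat; auto. Qed.

Lemma div_le_den (a b c : R) : 0 <= a -> 0 < b -> b <= c -> a / c <= a / b.
Proof.
  intros Ha Hb Hbc. unfold Rdiv. apply Rmult_le_compat_l; auto. apply Rinv_le_contravar; auto.
Qed.

Lemma ratio_bound (cA G n m2 E : R) : 0 < n -> 0 < m2 -> 0 <= E ->
  m2 * cA <= G * n + m2 * E -> G * n <= m2 * cA + m2 * E -> Rabs (cA / n - G / m2) <= E / n.
Proof.
  intros Hn Hm HE H1 H2.
  replace (cA / n - G / m2) with ((m2 * cA - G * n) / (m2 * n)) by (field; lra).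
  replace (E / n) with ((m2 * E) / (m2 * n)) by (field; lra).
  unfold Rdiv. rewrite Rabs_mult, (Rabs_pos_eq (/ (m2 * n))).
  2: { left; apply Rinv_0_lt_compat; nra. }
  apply Rmult_le_compat_r; [left; apply Rinv_0_lt_compat; nra|].
  apply Rabs_le. lra.
Qed.

Lemma lin_over_sq (a b N : R) : 0 <= a -> 0 <= b -> 1 <= N -> (a * N + b) / (N * N) <= (a + b) / N.
Proof.
  intros Ha Hb HN. replace ((a + b) / N) with ((a * N + b * N) / (N * N)) by (field; lra).
  apply div_le_compat; [nra|]. nra.
Qed.

Lemma S_len_pos N : (1 <= N)%nat -> INR N * INR N <= INR (length (S N)).
Proof. intros. rewrite <- mult_INR. apply le_INR. apply S_lower. Qed.

Lemma b_conv P M :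
  Un_cv (fun N => INR (cnt (Aps P (psM M)) (S N)) / INR (length (S N))) (partial_prod P M).
Proof.
  set (m := prodl (psM M)).
  assert (Hm : (1 <= m)%nat) by (apply prodl_pos; intros p Hp; pose proof (prime_ge_2 _ (psM_prime M p Hp)); lia).
  apply bound_cv with (c := 10 * INR m ^ 3). intros N HN.
  rewrite partial_prod_eq. fold m.
  destruct (equidist m N (Aps P (psM M)) Hm (fun t => Aps_periodic P (psM M) t Hm)) as [E1 E2].
  set (cA := cnt (Aps P (psM M)) (S N)) in *. set (G := cnt (Aps P (psM M)) (box m)) in *.
  set (n := length (S N)) in *. set (D := (2 * m * (2 * N + 3))%nat) in *.
  assert (HG : (G <= m * m)%nat) by (unfold G; rewrite <- box_length; apply cnt_le_len).
  apply le_INR in E1, E2, HG. rewrite !plus_INR, !mult_INR in E1, E2. rewrite mult_INR in HG.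
  assert (HD : INR D = 4 * INR m * INR N + 6 * INR m).
  { unfold D. rewrite !mult_INR, !plus_INR, !mult_INR. replace (INR 2) with 2 by (simpl; ring). replace (INR 3) with 3 by (simpl; ring). ring. }
  assert (HN1 : 1 <= INR N) by (apply (le_INR 1); auto).
  assert (Hn : INR N * INR N <= INR n) by (apply S_len_pos; auto).
  assert (Hm1 : 1 <= INR m) by (apply (le_INR 1); auto).
  assert (HD0 : 0 <= INR D) by apply pos_INR.
  assert (HG0 : 0 <= INR G) by apply pos_INR.
  rewrite mult_INR.
  eapply Rle_trans.
  - apply (ratio_bound (INR cA) (INR G) (INR n) (INR m * INR m) (INR G * INR D)); try nra.
  - eapply Rle_trans; [apply div_le_compat; [nra|apply Rmult_le_compat_r; [apply pos_INR|exact HG]]|].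
    eapply Rle_trans; [apply (div_le_den _ (INR N * INR N) (INR n)); [apply Rmult_le_pos; [nra|auto]|nra|exact Hn]|].
    rewrite HD.
    replace (INR m * INR m * (4 * INR m * INR N + 6 * INR m)) with ((4 * INR m ^ 3) * INR N + 6 * INR m ^ 3) by ring.
    replace (10 * INR m ^ 3) with (4 * INR m ^ 3 + 6 * INR m ^ 3) by ring.
    apply lin_over_sq; auto; nra.
Qed.

Definition rsum (l : list R) : R := fold_right Rplus 0 l.

Lemma INR_nsum {A} (f : A -> nat) l : INR (nsum (map f l)) = rsum (map (fun x => INR (f x)) l).
Proof. induction l; simpl; auto. rewrite plus_INR, IHl. auto. Qed.

Lemma rsum_le {A} (f g : A -> R) l : (forall x, In x l -> f x <= g x) -> rsum (map f l) <= rsum (map g l).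
Proof.
  induction l; simpl; intros H; [lra|]. assert (H1 := H a (or_introl eq_refl)).
  assert (H2 := IHl (fun x Hx => H x (or_intror Hx))). lra.
Qed.

Lemma inv_sq_step (a : R) : 2 <= a -> / (a * a) + / a <= / (a - 1).
Proof.
  intros Ha. replace (/ (a * a) + / a) with ((a + 1) / (a * a)) by (field; lra).
  replace (/ (a - 1)) with (1 / (a - 1)) by (field; lra).
  apply (Rmult_le_reg_r (a * a * (a - 1))); [nra|].
  replace ((a + 1) / (a * a) * (a * a * (a - 1))) with ((a + 1) * (a - 1)) by (field; lra).
  replace (1 / (a - 1) * (a * a * (a - 1))) with (a * a) by (field; lra). nra.
Qed.

Lemma sum_sq_bound (c : R) a L : 0 <= c -> (2 <= a)%nat ->
  rsum (map (fun g => c / (INR g * INR g) + 2) (seq a L)) <= c / INR (a - 1) + 2 * INR L.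
Proof.
  intros Hc. revert a. induction L as [|L IH]; intros a Ha; cbn [seq map rsum fold_right].
  - assert (0 < INR (a - 1)) by (apply lt_0_INR; lia). unfold Rdiv.
    assert (0 <= c * / INR (a - 1)) by (apply Rmult_le_pos; auto; left; apply Rinv_0_lt_compat; auto). unfold rsum; simpl; lra.
  - specialize (IH (Datatypes.S a) ltac:(lia)). replace (Datatypes.S a - 1)%nat with a in IH by lia.
    assert (HA : 2 <= INR a) by (apply (le_INR 2); auto).
    assert (Ha1 : INR (a - 1) = INR a - 1) by (rewrite minus_INR by lia; simpl; ring).
    rewrite Ha1. pose proof (inv_sq_step (INR a) HA) as Hs.
    assert (c / (INR a * INR a) + c / INR a <= c / (INR a - 1)).
    { unfold Rdiv. rewrite <- Rmult_plus_distr_l. apply Rmult_le_compat_l; auto. }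
    rewrite (S_INR L). unfold rsum in *. cbn [fold_right] in *. set (F := fold_right _ _ _) in *. set (x := c / (INR a * INR a)) in *. set (y := c / INR a) in *. set (z := c / (INR a - 1)) in *. lra.
Qed.

Definition Bg (N g : nat) : nat := (Z.to_nat ((2 * K N) / Z.of_nat g) + 1)%nat.

Lemma Bg_bound N g : (1 <= g)%nat -> INR (Bg N g * Bg N g) <= 8 * (INR N + 1) ^ 2 / (INR g * INR g) + 2.
Proof.
  intros Hg. unfold Bg. set (q := ((2 * K N) / Z.of_nat g)%Z).
  assert (Hq0 : (0 <= q)%Z) by (apply Z.div_pos; unfold K; lia).
  assert (Hq : (Z.of_nat g * q <= 2 * K N)%Z) by (apply Z.mul_div_le; lia).
  rewrite mult_INR, plus_INR. rewrite INR_IZR_INZ, Z2Nat.id by auto. simpl (INR 1).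
  apply IZR_le in Hq. rewrite mult_IZR, <- INR_IZR_INZ in Hq. unfold K in Hq.
  rewrite mult_IZR, plus_IZR, <- INR_IZR_INZ in Hq.
  set (x := IZR q) in *. set (gr := INR g) in *.
  assert (Hgr : 1 <= gr) by (apply (le_INR 1); auto).
  assert (Hx0 : 0 <= x) by (apply IZR_le in Hq0; auto).
  set (w := 4 * (INR N + 1) ^ 2 / (gr * gr)).
  assert (Hw : w * (gr * gr) = 4 * (INR N + 1) ^ 2) by (unfold w; field; lra).
  assert (Hxw : x * x <= w).
  { apply (Rmult_le_reg_r (gr * gr)); [nra|]. rewrite Hw. simpl in Hq.
    assert (0 <= gr * x) by nra. nra. }
  replace (8 * (INR N + 1) ^ 2 / (gr * gr)) with (2 * w) by (unfold w; field; lra).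
  clearbody x gr w. pose proof (Rle_0_sqr (x-1)). unfold Rsqr in *. nra.
Qed.

Lemma tail_R P M N :
  INR (cnt (fun t => andb (Aps P (psM M) t) (negb (good P t))) (S N)) <=
  INR (length P) * (1 + 8 * (INR N + 1) ^ 2 / INR (M + 1) + 2 * (INR N + INR (Rn P))).
Proof.
  eapply Rle_trans; [apply le_INR, tail_count|].
  eapply Rle_trans.
  - apply le_INR. apply (nsum_le _ (fun _ => (1 + nsum (map (fun g => Bg N g * Bg N g) (Gs P M N)))%nat)).
    intros x _. apply Nat.add_le_mono_l. apply nsum_le. intros g Hg.
    unfold Gs in Hg. apply in_seq in Hg. apply count_hit. lia.
  - rewrite nsum_const, mult_INR, plus_INR, INR_nsum. rewrite Rmult_comm. apply Rmult_le_compat_l; [apply pos_INR|].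
    simpl (INR 1).
    enough (rsum (map (fun x => INR (Bg N x * Bg N x)) (Gs P M N)) <= 8 * (INR N + 1) ^ 2 / INR (M + 1) + 2 * (INR N + INR (Rn P))) by lra.
    eapply Rle_trans.
    + apply (rsum_le _ (fun g => 8 * (INR N + 1) ^ 2 / (INR g * INR g) + 2)).
      intros g Hg. unfold Gs in Hg. apply in_seq in Hg. apply Bg_bound. lia.
    + unfold Gs. eapply Rle_trans; [apply sum_sq_bound; [apply Rmult_le_pos; [lra|apply pow_le; pose proof (pos_INR N); lra]|lia]|].
      replace (M + 2 - 1)%nat with (M + 1)%nat by lia. rewrite (plus_INR N). lra.
Qed.

End PartH.

Section PartI.
Local Open Scope R_scope.

Lemma cnt_split_eq {X} (f g : X -> bool) l : cnt f l = (cnt (fun t => andb (f t) (g t)) l + cnt (fun t => andb (f t) (negb (g t))) l)%nat.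
Proof. induction l; simpl; auto. rewrite !cnt_cons, IHl. destruct (f a), (g a); simpl; lia. Qed.

Definition aseq P N := INR (cnt (good P) (S N)) / INR (length (S N)).
Definition bseq P M N := INR (cnt (Aps P (psM M)) (S N)) / INR (length (S N)).
Definition hseq P N := INR (length P) * (1 + 2 * (INR N + INR (Rn P))) / (INR N * INR N).

Lemma h_cv P : Un_cv (hseq P) 0.
Proof.
  apply bound_cv with (c := 2 * INR (length P) + INR (length P) * (1 + 2 * INR (Rn P))).
  intros N HN. rewrite Rminus_0_r. unfold hseq.
  assert (HN1 : 1 <= INR N) by (apply (le_INR 1); auto).
  pose proof (pos_INR (length P)). pose proof (pos_INR (Rn P)).
  rewrite Rabs_pos_eq.
  - replace (INR (length P) * (1 + 2 * (INR N + INR (Rn P)))) with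
      ((2 * INR (length P)) * INR N + INR (length P) * (1 + 2 * INR (Rn P))) by ring.
    apply lin_over_sq; auto; nra.
  - unfold Rdiv. apply Rmult_le_pos; [nra|]. left; apply Rinv_0_lt_compat; nra.
Qed.

Lemma a_le_b P M N : (1 <= N)%nat -> aseq P N <= bseq P M N.
Proof.
  intros HN. unfold aseq, bseq. apply div_le_compat.
  - pose proof (S_len_pos N HN). assert (1 <= INR N) by (apply (le_INR 1); auto). nra.
  - apply le_INR, cnt_mono. intros t _ H. apply good_AM; auto.
Qed.

Lemma b_le_a P M N : (1 <= N)%nat ->
  bseq P M N - 32 * INR (length P) / INR (M + 1) - hseq P N <= aseq P N.
Proof.
  intros HN. unfold aseq, bseq, hseq.
  set (n := INR (length (S N))). set (p := INR (length P)). set (mm := INR (M + 1)).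
  set (Nr := INR N). set (Rr := INR (Rn P)).
  assert (HN1 : 1 <= Nr) by (apply (le_INR 1); auto).
  assert (Hn : Nr * Nr <= n) by (apply S_len_pos; auto).
  assert (Hmm : 1 <= mm) by (apply (le_INR 1); lia).
  assert (Hp : 0 <= p) by apply pos_INR. assert (HR : 0 <= Rr) by apply pos_INR.
  pose proof (tail_R P M N) as HT. fold p Nr mm Rr in HT.
  pose proof (cnt_split_eq (Aps P (psM M)) (good P) (S N)) as Hs.
  assert (Hg : (cnt (fun t => andb (Aps P (psM M) t) (good P t)) (S N) <= cnt (good P) (S N))%nat)
    by (apply cnt_mono; intros t _ H; apply Bool.andb_true_iff in H; tauto).
  assert (HA : INR (cnt (Aps P (psM M)) (S N)) <= INR (cnt (good P) (S N)) +
      INR (cnt (fun t => andb (Aps P (psM M) t) (negb (good P t))) (S N))).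
  { rewrite <- plus_INR. apply le_INR. lia. }
  set (cA := INR (cnt (Aps P (psM M)) (S N))) in *. set (cG := INR (cnt (good P) (S N))) in *.
  set (T := INR (cnt (fun t => andb (Aps P (psM M) t) (negb (good P t))) (S N))) in *.
  clearbody n p mm Nr Rr cA cG T.
  set (T1 := p * (8 * (Nr + 1) ^ 2 / mm)). set (T2 := p * (1 + 2 * (Nr + Rr))).
  assert (HT' : T <= T1 + T2) by (unfold T1, T2; nra).
  assert (Hnpos : 0 < n) by nra.
  assert (E1 : T1 / n <= 32 * p / mm).
  { unfold T1. replace (p * (8 * (Nr + 1) ^ 2 / mm) / n) with ((p / mm) * (8 * (Nr + 1) ^ 2 / n)) by (field; lra).
    replace (32 * p / mm) with ((p / mm) * 32) by (field; lra).
    apply Rmult_le_compat_l; [unfold Rdiv; apply Rmult_le_pos; auto; left; apply Rinv_0_lt_compat; lra|].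
    apply (Rmult_le_reg_r n); auto. replace (8 * (Nr + 1) ^ 2 / n * n) with (8 * (Nr + 1) ^ 2) by (field; lra). nra. }
  assert (E2 : T2 / n <= T2 / (Nr * Nr)) by (apply div_le_den; [unfold T2; nra|nra|auto]).
  assert (E3 : cA / n <= cG / n + T1 / n + T2 / n).
  { replace (cG / n + T1 / n + T2 / n) with ((cG + T1 + T2) / n) by (field; lra). apply div_le_compat; auto; lra. }
  fold T2. lra.
Qed.

Lemma key P L M : Un_cv (aseq P) L ->
  Rabs (partial_prod P M - L) <= 32 * INR (length P) / INR (M + 1).
Proof.
  intros Ha.
  assert (H : partial_prod P M - 32 * INR (length P) / INR (M + 1) - 0 <= L).
  { apply (lim_le_ev (fun N => bseq P M N - 32 * INR (length P) / INR (M + 1) - hseq P N) (aseq P) _ _ 1); auto.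
    - apply CV_minus; [apply CV_minus|apply h_cv].
      + apply b_conv.
      + intros e He; exists 0%nat; intros; unfold R_dist; rewrite Rminus_diag, Rabs_R0; auto.
    - intros N HN. apply b_le_a; auto. }
  assert (H2 : L <= partial_prod P M).
  { apply (lim_le_ev (aseq P) (bseq P M) _ _ 1); auto. apply b_conv. intros; apply a_le_b; auto. }
  assert (H3 : 0 <= 32 * INR (length P) / INR (M + 1)).
  { unfold Rdiv. apply Rmult_le_pos; [pose proof (pos_INR (length P)); lra|].
    left; apply Rinv_0_lt_compat, lt_0_INR; lia. }
  set (z := 32 * INR (length P) / INR (M + 1)) in *. set (w := partial_prod P M) in *. clearbody z w.
  apply Rabs_le. lra.
Qed.

End PartI.

Open Scope R_scope.

Theorem corollaryA1 (rho : R) (P : list pt) (d : list pt -> R) :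
  0 < rho ->
  is_patch rho P ->
  (forall Q, In Q (subsets (ball_pts rho)) -> Un_cv (dens_seq rho Q) (d Q)) ->
  Un_cv (partial_prod P) (nuB rho P d).
Proof.
  intros Hrho Hp Hd.
  assert (Ha : Un_cv (aseq P) (nuB rho P d)) by (apply (nuB_limit rho P d Hp Hd)).
  apply bound_cv with (c := 32 * INR (length P)). intros M HM.
  eapply Rle_trans; [apply key; auto|].
  apply div_le_den.
  - pose proof (pos_INR (length P)); lra.
  - apply lt_0_INR; lia.
  - apply le_INR; lia.
Qed.
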